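(* Let $M$ and $N$ be finitely generated, semipositive binoids. Then for every $q\in\mathbb N_+$ $$\operatorname{HKF}(M\wedge N,q)=\operatorname{HKF}(M,q)\cdot\operatorname{HKF}(N,q).$$
   Context: A binoid $(N,+,0,\infty)$ is a commutative monoid $(N,+,0)$ with an element $\infty$ satisfying $a+\infty=\infty$ for all $a\in N$. Write $N^\bullet=N\setminus\{\infty\}$, $N^\times$ for the group of units of $N$ and $N_+=N\setminus N^\times$. $N$ is finitely generated if it is finitely generated as a monoid; semipositive if $N\neq\{\infty\}$ and $N^\times$ is finite. The smash product $M\wedge N$ is the binoid $(M^\bullet\times N^\bullet)\cup\{\infty\}$ with $(a,b)+(c,d)=(a+c,b+d)$ if $a+c\neq\infty$ and $b+d\neq\infty$, and $=\infty$ otherwise. An ideal of $N$ is a nonempty subset $I\subseteq N$ with $I+N\subseteq I$. For an ideal $I$ and $q\in\mathbb N_+$, $[q]I$ denotes the ideal generated by $\{qa: a\in I\}$; $N/I=(N\setminus I)\cup\{\infty\}$. $\operatorname{HKF}(N,q)=\#N/[q]N_+$, with $\#S=|S|-1$ for a finite pointed set $S$. *)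

(* Defs.v *)
From Stdlib Require Import List Arith ClassicalEpsilon.
Import ListNotations.

Record binoid_data : Type := BinoidData {
  car :> Type;
  bop : car -> car -> car;
  bzero : car;
  binf : car
}.

Definition is_binoid (N : binoid_data) : Prop :=
  (forall a b c : N, bop N a (bop N b c) = bop N (bop N a b) c) /\
  (forall a b : N, bop N a b = bop N b a) /\
  (forall a : N, bop N (bzero N) a = a) /\
  (forall a : N, bop N a (binf N) = binf N).

Inductive gen_by (N : binoid_data) (S : N -> Prop) : N -> Prop :=
  | gen_zero : gen_by N S (bzero N)
  | gen_base : forall x, S x -> gen_by N S x
  | gen_add : forall x y, gen_by N S x -> gen_by N S y -> gen_by N S (bop N x y).

Definition fin_generated (N : binoid_data) : Prop :=
  exists gens : list N, forall x : N, gen_by N (fun g => In g gens) x.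

Definition is_unit (N : binoid_data) (x : N) : Prop :=
  exists y : N, bop N x y = bzero N.

Definition Nplus (N : binoid_data) (x : N) : Prop := ~ is_unit N x.

Definition semipositive (N : binoid_data) : Prop :=
  (exists x : N, x <> binf N) /\
  (exists s : list N, forall u : N, is_unit N u -> In u s).

Fixpoint nsmul (N : binoid_data) (q : nat) (a : N) : N :=
  match q with
  | 0 => bzero N
  | S q' => bop N a (nsmul N q' a)
  end.

(** The ideal generated by a set S: the smallest ideal containing S,
    i.e. (S + N) together with oo (ideals are nonempty, hence contain oo). *)
Definition gen_ideal (N : binoid_data) (S : N -> Prop) (y : N) : Prop :=
  y = binf N \/ exists x n : N, S x /\ y = bop N x n.

Definition qideal (N : binoid_data) (q : nat) (I : N -> Prop) : N -> Prop :=
  gen_ideal N (fun y => exists a, I a /\ y = nsmul N q a).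

Definition has_card (T : Type) (P : T -> Prop) (n : nat) : Prop :=
  exists l : list T, List.NoDup l /\ List.length l = n /\ (forall x, P x <-> In x l).

(** HKF(N,q) = #(N/[q]N_+) = |(N \ [q]N_+) u {oo}| - 1 = |N \ [q]N_+|
    (since oo lies in every ideal).  [HKF_is N q n] says HKF(N,q) is finite
    and equals n. *)
Definition HKF_is (N : binoid_data) (q : nat) (n : nat) : Prop :=
  has_card (car N) (fun x : N => ~ qideal N q (Nplus N) x) n.

(** Smash product M ^ N = (M^. x N^.) u {oo}; [None] is oo. *)
Definition smash_pt (M N : binoid_data) : Type :=
  option {p : M * N | fst p <> binf M /\ snd p <> binf N}.

Definition smash_mk (M N : binoid_data) (a : M) (b : N) : smash_pt M N :=
  match excluded_middle_informative (a <> binf M /\ b <> binf N) with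
  | left h => Some (exist _ (a, b) h)
  | right _ => None
  end.

Definition smash_op (M N : binoid_data) (x y : smash_pt M N) : smash_pt M N :=
  match x, y with
  | Some (exist _ (a, b) _), Some (exist _ (c, d) _) =>
      smash_mk M N (bop M a c) (bop N b d)
  | _, _ => None
  end.

Definition smash (M N : binoid_data) : binoid_data :=
  @BinoidData (smash_pt M N) (smash_op M N) (smash_mk M N (bzero M) (bzero N)) None.

(* Main.v *)
Require Import Defs.
From Stdlib Require Import List Arith Lia ClassicalEpsilon Classical ProofIrrelevance.
Import ListNotations.

Section Fin.
Variable N : binoid_data.
Hypothesis HN : is_binoid N.
Variable q : nat.
Hypothesis Hq : 0 < q.

Notation "a ++' b" := (bop N a b) (at level 50, left associativity).
Let I := qideal N q (Nplus N).

Lemma b_assoc a b c : a ++' (b ++' c) = a ++' b ++' c.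
Proof. destruct HN as [h _]; apply h. Qed.
Lemma b_comm a b : a ++' b = b ++' a.
Proof. destruct HN as [_ [h _]]; apply h. Qed.
Lemma b_zl a : bzero N ++' a = a.
Proof. destruct HN as [_ [_ [h _]]]; apply h. Qed.
Lemma b_zr a : a ++' bzero N = a.
Proof. rewrite b_comm; apply b_zl. Qed.
Lemma b_infr a : a ++' binf N = binf N.
Proof. destruct HN as [_ [_ [_ h]]]; apply h. Qed.
Lemma b_infl a : binf N ++' a = binf N.
Proof. rewrite b_comm; apply b_infr. Qed.

Lemma I_add x y : I x -> I (x ++' y).
Proof.
  intros [->|[c [n [Hc ->]]]].
  - left; apply b_infl.
  - right; exists c, (n ++' y); split; [exact Hc| now rewrite b_assoc].
Qed.

Lemma nsmul_add n m g : nsmul N (n+m) g = nsmul N n g ++' nsmul N m g.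
Proof.
  induction n; simpl.
  - now rewrite b_zl.
  - now rewrite IHn, b_assoc.
Qed.

Lemma unit_add u v : is_unit N u -> is_unit N v -> is_unit N (u ++' v).
Proof.
  intros [u' Hu] [v' Hv]. exists (u' ++' v').
  rewrite b_assoc. rewrite <- (b_assoc u v u'). rewrite (b_comm v u').
  rewrite (b_assoc u u' v), Hu, b_zl. exact Hv.
Qed.

Lemma unit_zero : is_unit N (bzero N).
Proof. exists (bzero N); apply b_zl. Qed.

Variable us : list N.
Hypothesis Hus : forall u, is_unit N u -> In u us.

Fixpoint Rep (gl : list N) (x : N) : Prop :=
  match gl with
  | [] => is_unit N x
  | g :: gl' => exists n y, n < q /\ Rep gl' y /\ x = nsmul N n g ++' y
  end.

Lemma Rep_unit gl u : is_unit N u -> Rep gl u.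
Proof.
  induction gl; simpl; intros Hu; auto.
  exists 0, u; repeat split; auto. simpl; now rewrite b_zl.
Qed.

Lemma Rep_gen gl g : (forall h, In h gl -> Nplus N h) -> In g gl -> I g \/ Rep gl g.
Proof.
  induction gl as [|h gl IH]; simpl; intros Hgl Hin; [contradiction|].
  destruct Hin as [->|Hin].
  - destruct (Nat.eq_dec q 1) as [E|E].
    + left; right. exists (nsmul N q g), (bzero N). split.
      * exists g; split; auto.
      * rewrite E; simpl; now rewrite !b_zr.
    + right. exists 1, (bzero N). repeat split; [lia| apply Rep_unit, unit_zero|].
      simpl; now rewrite !b_zr.
  - destruct (IH (fun k hk => Hgl k (or_intror hk)) Hin) as [H|H]; [now left|].
    right; exists 0, g; split; [lia|split; auto]. simpl; now rewrite b_zl.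
Qed.

Lemma Rep_add gl x y : (forall h, In h gl -> Nplus N h) -> Rep gl x -> Rep gl y ->
  I (x ++' y) \/ Rep gl (x ++' y).
Proof.
  revert x y; induction gl as [|g gl IH]; simpl; intros x y Hgl Hx Hy.
  - right; now apply unit_add.
  - destruct Hx as [n [x' [Hn [Hx' ->]]]]. destruct Hy as [m [y' [Hm [Hy' ->]]]].
    assert (E : nsmul N n g ++' x' ++' (nsmul N m g ++' y') = nsmul N (n+m) g ++' (x' ++' y')).
    { rewrite nsmul_add. rewrite !b_assoc. f_equal.
      rewrite <- !b_assoc. f_equal. apply b_comm. }
    rewrite E.
    destruct (IH x' y' (fun k hk => Hgl k (or_intror hk)) Hx' Hy') as [H|H].
    + left. rewrite b_comm. now apply I_add.
    + destruct (lt_dec (n+m) q) as [L|L].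
      * right; exists (n+m), (x' ++' y'); split; [exact L|split; [exact H|reflexivity]].
      * left. replace (n+m) with (q + (n+m-q)) by lia. rewrite nsmul_add.
        right. exists (nsmul N q g), (nsmul N (n+m-q) g ++' (x' ++' y')). split.
        -- exists g; split; auto.
        -- symmetry; apply b_assoc.
Qed.

Fixpoint FinL (gl : list N) : list N :=
  match gl with
  | [] => us
  | g :: gl' => flat_map (fun y => map (fun n => nsmul N n g ++' y) (seq 0 q)) (FinL gl')
  end.

Lemma Rep_fin gl x : Rep gl x -> In x (FinL gl).
Proof.
  revert x; induction gl as [|g gl IH]; simpl; intros x Hx; auto.
  destruct Hx as [n [y [Hn [Hy ->]]]].
  apply in_flat_map. exists y; split; auto.
  apply in_map_iff. exists n; split; auto. apply in_seq; lia.
Qed.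

Definition nub (g : N) : bool := if excluded_middle_informative (Nplus N g) then true else false.

Lemma cover gens : forall x, gen_by N (fun g => In g gens) x ->
  I x \/ Rep (filter nub gens) x.
Proof.
  assert (Hgl : forall h, In h (filter nub gens) -> Nplus N h).
  { intros h Hh. apply filter_In in Hh as [_ Hh]. unfold nub in Hh.
    destruct excluded_middle_informative; congruence. }
  intros x Hx; induction Hx.
  - right; apply Rep_unit, unit_zero.
  - destruct (classic (is_unit N x)) as [U|U].
    + right; now apply Rep_unit.
    + apply Rep_gen; auto. apply filter_In; split; auto. unfold nub.
      destruct excluded_middle_informative; auto; contradiction.
  - destruct IHHx1 as [H1|H1]; [left; now apply I_add|].
    destruct IHHx2 as [H2|H2]; [left; rewrite b_comm; now apply I_add|].
    now apply Rep_add.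
Qed.

End Fin.

Lemma card_of_cover (T : Type) (P : T -> Prop) (L : list T) :
  (forall x, P x -> In x L) -> exists n, has_card T P n.
Proof.
  intros HL.
  set (dec := fun x y : T => excluded_middle_informative (x = y)).
  set (f := fun x => if excluded_middle_informative (P x) then true else false).
  exists (length (nodup dec (filter f L))). exists (nodup dec (filter f L)).
  split; [apply NoDup_nodup|split; auto].
  intros x. rewrite nodup_In, filter_In. unfold f.
  destruct excluded_middle_informative as [p|p]; split.
  - intros; split; auto.
  - intros; auto.
  - intros; contradiction.
  - intros [_ E]; discriminate.
Qed.

Lemma HKF_fin (N : binoid_data) q : is_binoid N -> fin_generated N -> semipositive N -> 0 < q ->
  exists n, HKF_is N q n.
Proof.
  intros HN [gens Hg] [_ [us Hus]] Hq.
  apply (card_of_cover _ _ (FinL N q us (filter (nub N) gens))).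
  intros x Hx. destruct (cover N HN q Hq gens x (Hg x)) as [H|H]; [contradiction|].
  now apply Rep_fin.
Qed.

Section Smash.
Variables M N : binoid_data.
Hypothesis HM : is_binoid M.
Hypothesis HN : is_binoid N.
Let S := smash M N.

Lemma mk_None (a : M) (b : N) : a = binf M \/ b = binf N -> smash_mk M N a b = None.
Proof.
  intros H; unfold smash_mk; destruct excluded_middle_informative as [[h1 h2]|h]; auto.
  destruct H; contradiction.
Qed.

Lemma mk_Some (a : M) (b : N) h : smash_mk M N a b = Some (exist _ (a,b) h).
Proof.
  unfold smash_mk; destruct excluded_middle_informative as [h'|h'].
  - f_equal; f_equal; apply proof_irrelevance.
  - contradiction.
Qed.

Lemma mk_op a b c d : bop S (smash_mk M N a b) (smash_mk M N c d) = smash_mk M N (bop M a c) (bop N b d).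
Proof.
  destruct (classic (a <> binf M /\ b <> binf N)) as [h1|h1].
  - destruct (classic (c <> binf M /\ d <> binf N)) as [h2|h2].
    + rewrite (mk_Some a b h1), (mk_Some c d h2). reflexivity.
    + rewrite (mk_None c d), (mk_None (bop M a c)).
      * rewrite (mk_Some a b h1); reflexivity.
      * apply not_and_or in h2. destruct h2 as [h2|h2]; apply NNPP in h2; subst;
          [left; apply (b_infr M HM)|right; apply (b_infr N HN)].
      * apply not_and_or in h2. destruct h2 as [h2|h2]; apply NNPP in h2; auto.
  - rewrite (mk_None a b), (mk_None (bop M a c)); auto.
    + apply not_and_or in h1. destruct h1 as [h1|h1]; apply NNPP in h1; subst;
          [left; apply (b_infl M HM)|right; apply (b_infl N HN)].
    + apply not_and_or in h1. destruct h1 as [h1|h1]; apply NNPP in h1; auto.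
Qed.

Lemma pt_cases (x : S) : x = None \/ exists a b, a <> binf M /\ b <> binf N /\ x = smash_mk M N a b.
Proof.
  destruct x as [[[a b] h]|]; auto. right; exists a, b.
  destruct h as [h1 h2]; repeat split; auto. symmetry; apply (mk_Some a b (conj h1 h2)).
Qed.

Lemma op_None_l (x : S) : bop S None x = None.
Proof. reflexivity. Qed.
Lemma op_None_r (x : S) : bop S x None = None.
Proof. destruct x as [[[a b] h]|]; reflexivity. Qed.

Lemma mk_inj a b c d : a <> binf M -> b <> binf N ->
  smash_mk M N a b = smash_mk M N c d -> a = c /\ b = d.
Proof.
  intros h1 h2 E. rewrite (mk_Some a b (conj h1 h2)) in E.
  destruct (classic (c <> binf M /\ d <> binf N)) as [h|h].
  - rewrite (mk_Some c d h) in E. injection E; auto.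
  - rewrite mk_None in E; [discriminate|].
    apply not_and_or in h. destruct h as [h|h]; apply NNPP in h; auto.
Qed.

Lemma mk_nsmul n a b : nsmul S n (smash_mk M N a b) = smash_mk M N (nsmul M n a) (nsmul N n b).
Proof.
  induction n; [reflexivity|]. simpl nsmul. rewrite IHn. apply mk_op.
Qed.

Lemma nsmul_None n : 0 < n -> nsmul S n None = None.
Proof. destruct n; [lia|reflexivity]. Qed.

Lemma nsmul_zero (T : binoid_data) (HT : is_binoid T) n : nsmul T n (bzero T) = bzero T.
Proof. induction n; simpl; auto. rewrite IHn. apply (b_zl T HT). Qed.

Hypothesis z0M : bzero M <> binf M.
Hypothesis z0N : bzero N <> binf N.

Lemma unit_split x y : ~ is_unit S (smash_mk M N x y) -> ~ is_unit M x \/ ~ is_unit N y.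
Proof.
  intros H. apply NNPP; intros H'. apply not_or_and in H' as [[x' Hx]%NNPP [y' Hy]%NNPP].
  apply H. exists (smash_mk M N x' y'). rewrite mk_op, Hx, Hy. reflexivity.
Qed.

Lemma nonunit_l x : ~ is_unit M x -> ~ is_unit S (smash_mk M N x (bzero N)).
Proof.
  intros H [z Hz]. destruct (pt_cases z) as [->|[c [d [_ [_ ->]]]]].
  - rewrite op_None_r in Hz. change (None = smash_mk M N (bzero M) (bzero N)) in Hz.
    rewrite (mk_Some _ _ (conj z0M z0N)) in Hz; discriminate.
  - rewrite mk_op in Hz. change (smash_mk M N (bop M x c) (bop N (bzero N) d) = smash_mk M N (bzero M) (bzero N)) in Hz.
    symmetry in Hz. apply mk_inj in Hz as [Hz _]; auto. apply H; exists c; auto.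
Qed.

Lemma nonunit_r y : ~ is_unit N y -> ~ is_unit S (smash_mk M N (bzero M) y).
Proof.
  intros H [z Hz]. destruct (pt_cases z) as [->|[c [d [_ [_ ->]]]]].
  - rewrite op_None_r in Hz. change (None = smash_mk M N (bzero M) (bzero N)) in Hz.
    rewrite (mk_Some _ _ (conj z0M z0N)) in Hz; discriminate.
  - rewrite mk_op in Hz. change (smash_mk M N (bop M (bzero M) c) (bop N y d) = smash_mk M N (bzero M) (bzero N)) in Hz.
    symmetry in Hz. apply mk_inj in Hz as [_ Hz]; auto. apply H; exists d; auto.
Qed.

Variable q : nat.
Hypothesis Hq : 0 < q.

Lemma ideal_smash a b : a <> binf M -> b <> binf N ->
  (qideal S q (Nplus S) (smash_mk M N a b) <-> qideal M q (Nplus M) a \/ qideal N q (Nplus N) b).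
Proof.
  intros ha hb. split.
  - intros [E|[xs [ns [[as_ [Has ->]] E]]]].
    + rewrite (mk_Some a b (conj ha hb)) in E; discriminate.
    + destruct (pt_cases as_) as [->|[x [y [_ [_ ->]]]]].
      { rewrite nsmul_None in E; auto. rewrite op_None_l in E.
        rewrite (mk_Some a b (conj ha hb)) in E; discriminate. }
      destruct (pt_cases ns) as [->|[m [n [_ [_ ->]]]]].
      { rewrite op_None_r in E. rewrite (mk_Some a b (conj ha hb)) in E; discriminate. }
      rewrite mk_nsmul, mk_op in E. apply mk_inj in E as [E1 E2]; auto.
      destruct (unit_split x y Has) as [H|H].
      * left; right. exists (nsmul M q x), m; split; auto. exists x; auto.
      * right; right. exists (nsmul N q y), n; split; auto. exists y; auto.
  - intros [[E|[xm [m [[x [Hx ->]] ->]]]]|[E|[xn [n [[y [Hy ->]] ->]]]]]; try contradiction.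
    + right. exists (nsmul S q (smash_mk M N x (bzero N))), (smash_mk M N m b). split.
      * exists (smash_mk M N x (bzero N)); split; auto. now apply nonunit_l.
      * rewrite mk_nsmul, mk_op, (nsmul_zero N HN), (b_zl N HN). reflexivity.
    + right. exists (nsmul S q (smash_mk M N (bzero M) y)), (smash_mk M N a n). split.
      * exists (smash_mk M N (bzero M) y); split; auto. now apply nonunit_r.
      * rewrite mk_nsmul, mk_op, (nsmul_zero M HM), (b_zl M HM). reflexivity.
Qed.

End Smash.

Lemma NoDup_prod (A B : Type) (l : list A) (l' : list B) : NoDup l -> NoDup l' -> NoDup (list_prod l l').
Proof.
  intros H1 H2; induction H1 as [|a l Ha Hl IH]; simpl; [constructor|].
  apply NoDup_app; auto.
  - apply NoDup_map_NoDup_ForallPairs; auto. intros x y _ _ E; now injection E.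
  - intros [x y] H3 H4. apply in_map_iff in H3 as [z [E _]]. injection E as -> ->.
    apply in_prod_iff in H4 as [H4 _]; contradiction.
Qed.

Lemma z0 (T : binoid_data) : is_binoid T -> semipositive T -> bzero T <> binf T.
Proof.
  intros HT [[x Hx] _] E. apply Hx. rewrite <- (b_zl T HT x), E. apply (b_infl T HT).
Qed.

Theorem mainTheorem11 (M N : binoid_data) :
  is_binoid M -> is_binoid N ->
  fin_generated M -> fin_generated N ->
  semipositive M -> semipositive N ->
  forall q : nat, 0 < q ->
  exists a b : nat,
    HKF_is M q a /\ HKF_is N q b /\ HKF_is (smash M N) q (a * b).
Proof.
  intros HM HN fM fN sM sN q Hq.
  destruct (HKF_fin M q HM fM sM Hq) as [a [lM [DM [LM PM]]]].
  destruct (HKF_fin N q HN fN sN Hq) as [b [lN [DN [LN PN]]]].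
  pose proof (z0 M HM sM) as z0M. pose proof (z0 N HN sN) as z0N.
  exists a, b; split; [exists lM; auto|split; [exists lN; auto|]].
  assert (nM : forall x, In x lM -> x <> binf M).
  { intros x Hx E. apply PM in Hx. apply Hx. left; exact E. }
  assert (nN : forall x, In x lN -> x <> binf N).
  { intros x Hx E. apply PN in Hx. apply Hx. left; exact E. }
  exists (map (fun p => smash_mk M N (fst p) (snd p)) (list_prod lM lN)).
  split; [|split].
  - apply NoDup_map_NoDup_ForallPairs; [|now apply NoDup_prod].
    intros [x y] [x' y'] H1 H2 E. simpl in E.
    apply in_prod_iff in H1 as [H1 H1'].
    apply mk_inj in E as [-> ->]; auto.
  - rewrite length_map, length_prod; congruence.
  - intros x. destruct (pt_cases M N x) as [->|[c [d [hc [hd ->]]]]].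
    + split; [intros H; exfalso; apply H; left; reflexivity|].
      intros H. apply in_map_iff in H as [[u v] [E H]]. apply in_prod_iff in H as [H H'].
      simpl in E. rewrite (mk_Some M N u v (conj (nM u H) (nN v H'))) in E; discriminate.
    + rewrite (ideal_smash M N HM HN z0M z0N q Hq c d hc hd). split.
      * intros H. apply not_or_and in H as [H1 H2].
        apply in_map_iff. exists (c, d); split; auto. apply in_prod_iff; split.
        -- now apply PM. -- now apply PN.
      * intros H. apply in_map_iff in H as [[u v] [E H]]. apply in_prod_iff in H as [H H'].
        simpl in E. apply mk_inj in E as [<- <-]; auto.
        intros [K|K]; [apply PM in H|apply PN in H']; auto.
Qed.
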